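(* Let $G$ be a finite cyclic group whose order has at least two distinct prime divisors. Then the difference graph $\mathcal{D}(G)$ is disconnected if and only if $G\cong\mathbb{Z}_{pq}$ where $p$ and $q$ are two distinct primes. Moreover, the diameter of $\mathcal{D}(G)$ is at most $6$ whenever $G\not\cong\mathbb{Z}_{pq}$.
   Context: For a finite group $G$ with identity $e$: the intersection power graph $\mathcal{G}_I(G)$ has vertex set $G$, two distinct non-identity vertices $x,y$ being adjacent iff $\langle x\rangle\cap\langle y\rangle\neq\{e\}$, and $e$ being adjacent to every other vertex. The power graph $\mathcal{P}(G)$ has vertex set $G$, two distinct vertices being adjacent iff one is a power of the other. The difference graph $\mathcal{D}(G)$ is the graph on vertex set $G$ with edge set $E(\mathcal{G}_I(G))\setminus E(\mathcal{P}(G))$, with all isolated vertices removed. *)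

(* Defs.v *)
From mathcomp Require Import all_boot all_fingroup all_algebra all_solvable.
Set Implicit Arguments. Unset Strict Implicit. Unset Printing Implicit Defensive.
Local Open Scope group_scope.

Section DiffGraph.
Variable gT : finGroupType.
Variable G : {set gT}.

Definition ipg_adj (x y : gT) : bool :=
  [&& x \in G, y \in G, x != y &
      [|| x == 1, y == 1 | <[x]> :&: <[y]> != 1]].

Definition pow_adj (x y : gT) : bool :=
  [&& x \in G, y \in G, x != y & (x \in <[y]>) || (y \in <[x]>)].

Definition diff_adj (x y : gT) : bool := ipg_adj x y && ~~ pow_adj x y.

(* Vertex set of D(G): the non-isolated vertices. *)
Definition diff_vertices : {set gT} :=
  [set x in G | [exists y, diff_adj x y]].

(* D(G) is connected: it has at least one vertex and any two vertices are
   joined by a walk in D(G) (walks automatically stay in diff_vertices). *)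
Definition diff_connected : Prop :=
  diff_vertices != set0 /\
  forall x y, x \in diff_vertices -> y \in diff_vertices ->
    connect diff_adj x y.

Definition diff_diam_le (d : nat) : Prop :=
  forall x y, x \in diff_vertices -> y \in diff_vertices ->
    exists s : seq gT, [/\ (size s <= d)%N, path diff_adj x s & last x s = y].
End DiffGraph.

(* Main.v *)
Require Import Defs.
From mathcomp Require Import all_boot all_fingroup all_algebra all_solvable.
From Stdlib Require Import Classical.
Set Implicit Arguments. Unset Strict Implicit. Unset Printing Implicit Defensive.

Definition Dn a b := [&& 1 < gcdn a b, ~~ (a %| b) & ~~ (b %| a)].
Definition Rn n a b := [&& a %| n, b %| n & Dn a b].

Lemma Rn_sym n a b : Rn n a b = Rn n b a.
Proof.
by apply/idP/idP => /and3P[h1 h2 /and3P[h3 h4 h5]]; rewrite /Rn /Dn gcdnC h1 h2 h3 h4 h5.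
Qed.

Lemma gcd_gt1 p a b : 1 < p -> 0 < a -> p %| a -> p %| b -> 1 < gcdn a b.
Proof.
move=> p1 a0 pa pb; apply: leq_trans p1 _; apply: dvdn_leq.
  by rewrite gcdn_gt0 a0.
by rewrite dvdn_gcd pa.
Qed.

Lemma notfull p n : prime p -> 0 < n -> p %| n -> ~~ (p ^ logn p n %| n %/ p).
Proof.
move=> pp n0 pn; apply/negP => H.
have : p ^ (logn p n).+1 %| n by rewrite expnSr -[n in _ %| n](divnK pn) dvdn_pmul2r ?prime_gt0.
by rewrite pfactor_dvdn // ltnn.
Qed.

Lemma npX p q k : prime p -> prime q -> p != q -> ~~ (p %| q ^ k).
Proof. by move=> pp qq pq; rewrite Euclid_dvdX // dvdn_prime2 // (negbTE pq). Qed.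

Lemma dvd_divp n q : q %| n -> n %/ q %| n.
Proof. by move=> qn; rewrite -{2}(divnK qn) dvdn_mulr. Qed.

Lemma other_prime n p : 1 < size (primes n) -> exists q, [/\ prime q, q %| n & q != p].
Proof.
case E: (primes n) => [|a [|b s]] //= _.
have ua := primes_uniq n.
have : a \in primes n by rewrite E inE eqxx.
have : b \in primes n by rewrite E !inE eqxx orbT.
rewrite !mem_primes => /and3P[pb _ bn] /and3P[pa _ an].
move: ua; rewrite E /= inE negb_or => /andP[/andP[ab _] _].
have [ap|ap] := eqVneq a p; last by exists a.
by exists b; split => //; rewrite -ap eq_sym.
Qed.

Lemma vfacts n d e : 0 < n -> Rn n d e -> [/\ 1 < d, ~~ prime d, d != n & d %| n].
Proof.
move=> n0 /and3P[dn en /and3P[g nde ned]].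
have d0 : 0 < d by apply: dvdn_gt0 dn.
split => //.
- rewrite ltn_neqAle d0 andbT; apply/eqP => d1; by rewrite -d1 dvd1n in nde.
- apply/negP => pd; move: nde; rewrite -(prime_coprime _ pd) /coprime.
  by move/eqP => h; rewrite h in g.
- by apply/eqP => dE; rewrite dE en in ned.
Qed.

Lemma hub_adj n p q : 0 < n -> prime p -> prime q -> p != q -> p %| n -> q %| n ->
  n != p * q -> Rn n (n %/ p) (n %/ q).
Proof.
move=> n0 pp qq pq pn qn npq.
have cpq : coprime p q by rewrite prime_coprime // dvdn_prime2.
have : p * q %| n by rewrite Gauss_dvd // pn qn.
case/dvdnP=> m nE.
have m0 : 0 < m by move: n0; rewrite nE; case: m {nE}.
have m1 : 1 < m.
  rewrite ltn_neqAle m0 andbT; apply/eqP => m1; by rewrite nE -m1 mul1n eqxx in npq.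
apply/and3P; split; [exact: dvd_divp | exact: dvd_divp|].
have -> : n %/ p = q * m by rewrite nE mulnCA mulKn ?prime_gt0 // mulnC.
have -> : n %/ q = p * m by rewrite nE mulnA mulnK ?prime_gt0 // mulnC.
apply/and3P; split.
- by rewrite -muln_gcdl gcdnC (eqP cpq) mul1n.
- by rewrite dvdn_pmul2r // dvdn_prime2 // eq_sym.
- by rewrite dvdn_pmul2r // dvdn_prime2.
Qed.

Lemma dvd_pq p q d : prime p -> prime q -> d %| p * q ->
  [\/ d = 1, d = p, d = q | d = p * q].
Proof.
move=> pp qq dpq.
have [pd|npd] := boolP (p %| d).
  have [k dE] : exists k, d = k * p by exists (d %/ p); rewrite divnK.
  move: dpq; rewrite dE mulnC dvdn_pmul2l ?prime_gt0 // => kq.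
  case/primeP: qq => _ /(_ k kq) /orP[] /eqP ->.
    by rewrite muln1; apply: Or42.
  by apply: Or44.
have : coprime d p by rewrite coprime_sym prime_coprime.
move/Gauss_dvdr => h; move: dpq; rewrite h => dq.
by case/primeP: qq => _ /(_ d dq) /orP[] /eqP ->; [apply: Or41|apply: Or43].
Qed.

Lemma pq_novertex p q d e : prime p -> prime q -> ~~ Rn (p * q) d e.
Proof.
move=> pp qq; apply/negP => R.
have n0 : 0 < p * q by rewrite muln_gt0 !prime_gt0.
case: (vfacts n0 R) => d1 nd dn dpq.
by case: (dvd_pq pp qq dpq) => dE; move: d1 nd dn; rewrite dE ?pp ?qq ?eqxx ?andbF.
Qed.

Definition reach (r : rel nat) k a b :=
  exists s, [/\ size s <= k, path r a s & last a s = b].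

Lemma reach_cat r k1 k2 a b c : reach r k1 a b -> reach r k2 b c -> reach r (k1 + k2) a c.
Proof.
case=> [s1 [h1 p1 l1]] [s2 [h2 p2 l2]]; exists (s1 ++ s2).
by rewrite size_cat leq_add // cat_path p1 l1 p2 last_cat l1 l2.
Qed.

Lemma reach_le r k1 k2 a b : k1 <= k2 -> reach r k1 a b -> reach r k2 a b.
Proof. by move=> le [s [h1 h2 h3]]; exists s; split => //; apply: leq_trans le. Qed.

Lemma reach_sym n k a b : reach (Rn n) k a b -> reach (Rn n) k b a.
Proof.
case=> s [h1 p1 l1]; exists (rev (belast a s)); split.
- by rewrite size_rev size_belast.
- rewrite -l1 rev_path; apply: sub_path p1 => x y; by rewrite Rn_sym.
- by case: s {h1 p1} l1 => [|x s] /=; [move=> ->|rewrite rev_cons last_rcons].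
Qed.

Lemma reach1 (r : rel nat) a b : r a b -> reach r 1 a b.
Proof. by move=> h; exists [:: b]; rewrite /= h. Qed.

Lemma reach2 (r : rel nat) a b c : r a b -> r b c -> reach r 2 a c.
Proof. by move=> h h'; exists [:: b; c]; rewrite /= h h'. Qed.

Lemma near_hub n d e : 0 < n -> 1 < size (primes n) -> Rn n d e ->
  exists q, [/\ prime q, q %| n & reach (Rn n) 2 d (n %/ q)].
Proof.
move=> n0 sp R.
case: (vfacts n0 R) => d1 nd dn dvn.
have d0 : 0 < d by apply: ltnW.
have [/hasP [q qP ndq] | /hasPn allq] := boolP (has (fun q => ~~ (d %| n %/ q)) (primes n)).
  move: qP; rewrite mem_primes => /and3P[qq _ qn].
  exists q; split => //; apply: (@reach_le _ 1) => //; apply: reach1.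
  apply/and3P; split => //; first exact: dvd_divp.
  apply/and3P; split => //.
  - rewrite ltnNge; apply/negP => g1.
    have cop : coprime d (n %/ q).
      by rewrite /coprime eqn_leq g1 gcdn_gt0 d0.
    have : d %| q by rewrite -(Gauss_dvdr _ cop) divnK.
    case/primeP: (qq) => _ /[apply] /orP[] /eqP dE; first by rewrite dE in d1.
    by rewrite dE qq in nd.
  - apply/negP => h.
    have [k dE] : exists k, d = k * (n %/ q) by exists (d %/ (n %/ q)); rewrite divnK.
    have nq0 : 0 < n %/ q by rewrite divn_gt0 ?prime_gt0 // dvdn_leq.
    move: dvn; rewrite dE -[n in _ %| n](divnK qn) [k * _]mulnC dvdn_pmul2l // => kq.
    case/primeP: qq => _ /(_ k kq) /orP[] /eqP kE.
      by rewrite dE kE mul1n dvdnn in ndq.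
    by rewrite dE kE mulnC divnK // eqxx in dn.
pose p := pdiv d.
have pp : prime p := pdiv_prime d1.
have pd : p %| d := pdiv_dvd d.
have pn : p %| n := dvdn_trans pd dvn.
have inP q : prime q -> q %| n -> d %| n %/ q.
  by move=> qq qn; apply/negbNE/allq; rewrite mem_primes qq n0 qn.
case: (other_prime p sp) => q [qq qn qp].
have dnp := inP p pp pn.
have dnq := inP q qq qn.
pose P := p ^ logn p n.
have Pn : P %| n := pfactor_dvdnn p n.
have nPnp := notfull pp n0 pn.
have pP : p %| P.
  have : 0 < logn p n by rewrite logn_gt0 mem_primes pp n0 pn.
  by rewrite /P; case: (logn p n) => // k _; rewrite expnS dvdn_mulr.
have [dP | ndP] := boolP (d %| P).
  case/(dvdn_pfactor _ _ pp): (dP) => k kle dE.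
  have k2 : 1 < k.
    move: d1 nd; rewrite dE; case: k {kle dE} => [|[|k]] //; by rewrite ?expn1 pp.
  have ppd : p * p %| d by rewrite dE -[p * p]/(p ^ 2); apply: dvdn_exp2l.
  pose Q := q ^ logn q n.
  have Qn : Q %| n := pfactor_dvdnn q n.
  have nQnq := notfull qq n0 qn.
  have npQ : ~~ (p %| Q) by apply: npX => //; rewrite eq_sym.
  have qQ : q %| Q.
    have : 0 < logn q n by rewrite logn_gt0 mem_primes qq n0 qn.
    by rewrite /Q; case: (logn q n) => // j _; rewrite expnS dvdn_mulr.
  have cn : p * Q %| n by rewrite Gauss_dvd ?pn ?Qn // prime_coprime.
  exists q; split => //; apply: (@reach2 _ _ (p * Q)).
    apply/and3P; split => //; apply/and3P; split.
    - exact: (gcd_gt1 (prime_gt1 pp) d0 pd (dvdn_mulr _ (dvdnn p))).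
    - apply/negP => h; have := dvdn_trans ppd h.
      by rewrite dvdn_pmul2l ?prime_gt0 // (negbTE npQ).
    - apply/negP => h.
      have : q %| P := dvdn_trans (dvdn_trans qQ (dvdn_mull p (dvdnn Q))) (dvdn_trans h dP).
      by rewrite /P (negbTE (npX _ qq pp qp)).
  apply/and3P; split => //; first exact: dvd_divp.
  apply/and3P; split.
  - exact: (gcd_gt1 (prime_gt1 pp) (dvdn_gt0 n0 cn) (dvdn_mulr _ (dvdnn p)) (dvdn_trans pd dnq)).
  - apply/negP => h; move/negP: nQnq; apply; exact: dvdn_trans (dvdn_mull p (dvdnn Q)) h.
  - apply/negP => h; have := dvdn_trans (dvdn_trans ppd dnq) h.
    by rewrite dvdn_pmul2l ?prime_gt0 // (negbTE npQ).
exists p; split => //; apply: (@reach2 _ _ P).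
  apply/and3P; split => //; apply/and3P; split => //.
  - exact: (gcd_gt1 (prime_gt1 pp) d0 pd pP).
  - apply/negP => h; move/negP: nPnp; apply; exact: dvdn_trans h dnp.
apply/and3P; split => //; first exact: dvd_divp.
apply/and3P; split => //.
- exact: (gcd_gt1 (prime_gt1 pp) (dvdn_gt0 n0 Pn) pP (dvdn_trans pd dnp)).
- apply/negP => h.
  have cqp : coprime q p by rewrite prime_coprime // dvdn_prime2.
  have qnp : q %| n %/ p by rewrite -(Gauss_dvdl _ cqp) divnK.
  have := dvdn_trans qnp h; by rewrite (negbTE (npX _ qq pp qp)).
Qed.

Local Open Scope group_scope.

Lemma mem_cycle_dvd (gT : finGroupType) (G : {group gT}) (x y : gT) :
  cyclic G -> x \in G -> y \in G -> (x \in <[y]>) = (#[x] %| #[y])%N.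
Proof.
move=> cG xG yG; rewrite -cycle_subG -(cardSg_cyclic cG) ?cycle_subG //.
Qed.

Lemma divn_divK m d : (0 < m)%N -> (d %| m)%N -> (m %/ (m %/ d))%N = d.
Proof.
move=> m0 dm; have d0 : (0 < d)%N by apply: dvdn_gt0 dm.
have md0 : (0 < m %/ d)%N by rewrite divn_gt0 // dvdn_leq.
by rewrite -{1}(divnK dm) mulKn.
Qed.

Lemma meet_gcd (gT : finGroupType) (G : {group gT}) (x y : gT) :
  cyclic G -> x \in G -> y \in G ->
  (<[x]> :&: <[y]> != 1) = (1 < gcdn #[x] #[y])%N.
Proof.
move=> cG xG yG; apply/idP/idP.
  case/trivgPn => z /setIP[zx zy] nz1.
  have : (#[z] %| gcdn #[x] #[y])%N by rewrite dvdn_gcd (order_dvdG zx) (order_dvdG zy).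
  move/dvdn_leq; rewrite gcdn_gt0 order_gt0 => /(_ isT); apply: leq_trans.
  by rewrite ltn_neqAle order_gt0 andbT eq_sym order_eq1.
move=> g1; set g := gcdn _ _ in g1.
have gx : (g %| #[x])%N := dvdn_gcdl _ _.
pose u := x ^+ (#[x] %/ g).
have ou : #[u] = g.
  rewrite /u orderXdiv ?divn_divK ?order_gt0 //.
  by rewrite -{2}(divnK gx) dvdn_mulr.
apply/trivgPn; exists u.
  rewrite inE mem_cycle /= (mem_cycle_dvd cG) ?groupX // ou; exact: dvdn_gcdr.
apply/eqP => u1; move: g1; by rewrite -ou u1 order1.
Qed.

Lemma diff_adjE (gT : finGroupType) (G : {group gT}) (x y : gT) :
  cyclic G -> diff_adj G x y = [&& x \in G, y \in G & Rn #|G| #[x] #[y]].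
Proof.
move=> cG; rewrite /diff_adj /ipg_adj /pow_adj.
case xG: (x \in G); case yG: (y \in G) => //=.
rewrite !(mem_cycle_dvd cG) // (meet_gcd cG) // /Rn (order_dvdG xG) (order_dvdG yG) /= /Dn.
have [->|nx1] := eqVneq x 1; first by rewrite order1 dvd1n /= !andbT andbN andbF.
have [->|ny1] := eqVneq y 1; first by rewrite order1 dvd1n /= orbT !andbT andbN !andbF.
have [->|nxy] := eqVneq x y; first by rewrite dvdnn /= andbF.
by rewrite /= negb_or.
Qed.

Lemma elt_of_order (gT : finGroupType) (G : {group gT}) d :
  cyclic G -> (d %| #|G|)%N -> exists2 z, z \in G & #[z] = d.
Proof.
case/cyclicP => g GE dG.
have og : #[g] = #|G| by rewrite GE.
exists (g ^+ (#|G| %/ d)); first by rewrite GE mem_cycle.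
by rewrite orderXdiv og ?divn_divK ?cardG_gt0 // -og dvd_divp // og.
Qed.

Lemma lift_path (gT : finGroupType) (G : {group gT}) (y : gT) s : 
  cyclic G -> y \in G -> forall x, x \in G ->
  path (Rn #|G|) #[x] s -> last #[x] s = #[y] -> s != [::] ->
  exists t, [/\ size t = size s, path (diff_adj G) x t & last x t = y].
Proof.
move=> cG yG; elim: s => // c s IH x xG /= /andP[r ps] l _.
case: s IH ps l => [|c' s'] IH ps l.
  move: l => /= l; rewrite l in r; exists [:: y]; by rewrite /= (diff_adjE _ _ cG) xG yG r.
have cn : (c %| #|G|)%N by case/and3P: r.
case: (elt_of_order cG cn) => z zG oz.
rewrite -oz in ps l r.
case: (IH z zG ps l isT) => t [st pt lt].
exists (z :: t); split => //=; first by rewrite st.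
by rewrite (diff_adjE _ _ cG) xG zG r.
Qed.

Lemma verticesP (gT : finGroupType) (G : {group gT}) x :
  reflect (x \in G /\ exists y, diff_adj G x y) (x \in diff_vertices G).
Proof.
rewrite inE; apply: (iffP andP) => [[h /existsP e]|[h /existsP e]]; by split.
Qed.

Lemma pq_empty (gT : finGroupType) (G : {group gT}) p q :
  cyclic G -> prime p -> prime q -> #|G| = (p * q)%N -> diff_vertices G = set0.
Proof.
move=> cG pp qq nE; apply/setP => x; rewrite in_set0; apply/negbTE/negP => /verticesP[xG [y]].
rewrite (diff_adjE _ _ cG) nE => /and3P[_ _ R].
by move: (pq_novertex #[x] #[y] pp qq); rewrite R.
Qed.

Lemma not_pq_diam (gT : finGroupType) (G : {group gT}) :
  cyclic G -> (1 < size (primes #|G|))%N ->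
  (forall p q, prime p -> prime q -> p != q -> #|G| != (p * q)%N) ->
  diff_diam_le G 6.
Proof.
move=> cG sp npq x y /verticesP[xG [x' ax]] /verticesP[yG [y' ay]].
have n0 := cardG_gt0 G.
move: (ax) (ay); rewrite !(diff_adjE _ _ cG) => /and3P[_ x'G Rx] /and3P[_ y'G Ry].
case: (near_hub n0 sp Rx) => q1 [q1p q1n r1].
case: (near_hub n0 sp Ry) => q2 [q2p q2n r2].
have hub : reach (Rn #|G|) 1 (#|G| %/ q1) (#|G| %/ q2).
  have [<-|ne] := eqVneq q1 q2; first by exists [::].
  by apply: reach1; apply: hub_adj => //; apply: npq.
case: (reach_cat (reach_cat r1 hub) (reach_sym r2)) => s [sz ps ls].
have [s0|sn0] := eqVneq s [::].
  move: ls; rewrite s0 /= => oxy.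
  exists [:: x'; y]; split => //=.
  by rewrite ax (diff_adjE _ _ cG) x'G yG -oxy Rn_sym Rx.
case: (lift_path cG yG xG ps ls sn0) => t [st pt lt].
by exists t; split => //; rewrite st; apply: leq_trans sz _.
Qed.

Lemma not_pq_nonempty (gT : finGroupType) (G : {group gT}) :
  cyclic G -> (1 < size (primes #|G|))%N ->
  (forall p q, prime p -> prime q -> p != q -> #|G| != (p * q)%N) ->
  diff_vertices G != set0.
Proof.
move=> cG sp npq; have n0 := cardG_gt0 G.
case: (other_prime 0 sp) => p [pp pn _].
case: (other_prime p sp) => q [qq qn qp].
have R : Rn #|G| (#|G| %/ p) (#|G| %/ q).
  by apply: hub_adj => //; [rewrite eq_sym | apply: npq => //; rewrite eq_sym].
case: (elt_of_order cG (dvd_divp pn)) => z zG oz.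
case: (elt_of_order cG (dvd_divp qn)) => w wG ow.
apply/set0Pn; exists z; apply/verticesP; split => //; exists w.
by rewrite (diff_adjE _ _ cG) zG wG oz ow R.
Qed.

Unset Implicit Arguments.
Theorem theorem4p4 (gT : finGroupType) (G : {group gT}) :
  cyclic G -> (1 < size (primes #|G|))%N ->
  ((~ diff_connected G) <->
     exists p q : nat, [/\ prime p, prime q, p != q & G \isog Zp (p * q)])
  /\
  ((~ exists p q : nat, [/\ prime p, prime q, p != q & G \isog Zp (p * q)]) ->
     diff_diam_le G 6).
Proof.
move=> cG sp.
have isoE p q : prime p -> prime q -> (G \isog Zp (p * q)) <-> #|G| = (p * q)%N.
  move=> pp qq; split.
    by move/card_isog => ->; rewrite card_Zp // muln_gt0 !prime_gt0.
  move=> nE; case/cyclicP: (cG) => g GE.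
  have og : #[g] = (p * q)%N by rewrite -nE GE.
  by rewrite GE -og; apply: isog_symr; apply: Zp_isog.
have npqE : (~ exists p q : nat, [/\ prime p, prime q, p != q & G \isog Zp (p * q)]) ->
    (forall p q, prime p -> prime q -> p != q -> #|G| != (p * q)%N).
  move=> H p q pp qq pq; apply/eqP => nE; apply: H; exists p, q; split => //.
  by apply/isoE.
split; last by move=> H; apply: not_pq_diam => //; apply: npqE.
split.
  move=> nc; apply: NNPP => H; apply: nc; split.
    by apply: not_pq_nonempty => //; apply: npqE.
  move=> x y xv yv; apply/connectP.
  case: (not_pq_diam cG sp (npqE H) xv yv) => s [_ ps ls].
  by exists s.
case=> p [q [pp qq pq iso]] [ne _].
by move: ne; rewrite (pq_empty cG pp qq (proj1 (isoE p q pp qq) iso)) eqxx.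
Qed.
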